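(* Let $\beta\in(1,3/2]$, let $\vec z\in S_\beta$ and let $\vec z=\sum_{i=1}^\infty a_i\beta^{-i}$ with $a_i\in\{\vec q_0,\vec q_1,\vec q_2\}$ be any representation of $\vec z$ in base $\beta$. Then there exist $\omega\in\Omega$ and $\upsilon\in\Upsilon$ such that $a_i=d_i(\omega,\upsilon,\vec z)$ for all $i\ge1$.
   Context: $\vec q_0=(0,0)$, $\vec q_1=(1,0)$, $\vec q_2=(0,1)$; $S_\beta$ is the attractor of the IFS $f_{\vec q_i}(\vec z)=(\vec z+\vec q_i)/\beta$ (for $1<\beta\le3/2$ the closed triangle with vertices $(0,0)$, $(\frac1{\beta-1},0)$, $(0,\frac1{\beta-1})$). Subsets of $S_\beta$: $E_0=[0,\frac1\beta)\times[0,\frac1\beta)$; $E_1=\{0\le y<\frac1\beta,\ \frac{1}{\beta(\beta-1)}<x+y\le\frac{1}{\beta-1}\}$; $E_2=\{0\le x<\frac1\beta,\ \frac{1}{\beta(\beta-1)}<x+y\le\frac{1}{\beta-1}\}$; $C_{01}=\{x\ge\frac1\beta,\ 0\le y<\frac1\beta,\ x+y\le\frac{1}{\beta(\beta-1)}\}$; $C_{12}=\{x\ge\frac1\beta,\ y\ge\frac1\beta,\ \frac{1}{\beta(\beta-1)}<x+y\le\frac{1}{\beta-1}\}$; $C_{02}=\{0\le x<\frac1\beta,\ y\ge\frac1\beta,\ x+y\le\frac{1}{\beta(\beta-1)}\}$; $C_{012}=\{x\ge\frac1\beta,\ y\ge\frac1\beta,\ x+y\le\frac{1}{\beta(\beta-1)}\}$.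 $\Omega=\{0,1\}^{\mathbb N}$, $\Upsilon=\{0,1,2\}^{\mathbb N}$ with left shifts $\sigma,\sigma'$. $K_\beta:\Omega\times\Upsilon\times S_\beta\to\Omega\times\Upsilon\times S_\beta$: $K_\beta(\omega,\upsilon,\vec z)=(\omega,\upsilon,\beta\vec z-\vec q_i)$ if $\vec z\in E_i$; $(\sigma\omega,\upsilon,\beta\vec z-\vec q_i)$ if $\omega_1=0$, $\vec z\in C_{ij}$ ($ij\in\{01,12,02\}$); $(\sigma\omega,\upsilon,\beta\vec z-\vec q_j)$ if $\omega_1=1$, $\vec z\in C_{ij}$; $(\omega,\sigma'\upsilon,\beta\vec z-\vec q_i)$ if $\vec z\in C_{012}$ and $\upsilon_1=i$. The digit $d_1(\omega,\upsilon,\vec z)$ is the vector subtracted in this definition, and $d_n=d_1\circ K_\beta^{n-1}$. *)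

(* Defs.v *)
From Stdlib Require Import Reals Lra ClassicalEpsilon.
Open Scope R_scope.

Inductive digit3 := D0 | D1 | D2.

Definition qv (i : digit3) : R * R :=
  match i with D0 => (0, 0) | D1 => (1, 0) | D2 => (0, 1) end.

(* Omega = {0,1}^N (false = 0, true = 1); Upsilon = {0,1,2}^N.
   Sequences are indexed from 0: w 0 is omega_1, etc. *)
Definition Omega := nat -> bool.
Definition Upsilon := nat -> digit3.
Definition shiftO (w : Omega) : Omega := fun n => w (S n).
Definition shiftU (u : Upsilon) : Upsilon := fun n => u (S n).

Definition S_beta (beta : R) (z : R * R) : Prop :=
  0 <= fst z /\ 0 <= snd z /\ fst z + snd z <= / (beta - 1).

Section Regions.
Variable beta : R.
Let c := / (beta * (beta - 1)).
Let t := / (beta - 1).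

Definition E0 (z : R * R) : Prop :=
  let (x, y) := z in 0 <= x < / beta /\ 0 <= y < / beta.
Definition E1 (z : R * R) : Prop :=
  let (x, y) := z in 0 <= y < / beta /\ c < x + y <= t.
Definition E2 (z : R * R) : Prop :=
  let (x, y) := z in 0 <= x < / beta /\ c < x + y <= t.
Definition C01 (z : R * R) : Prop :=
  let (x, y) := z in / beta <= x /\ 0 <= y < / beta /\ x + y <= c.
Definition C12 (z : R * R) : Prop :=
  let (x, y) := z in / beta <= x /\ / beta <= y /\ c < x + y <= t.
Definition C02 (z : R * R) : Prop :=
  let (x, y) := z in 0 <= x < / beta /\ / beta <= y /\ x + y <= c.
Definition C012 (z : R * R) : Prop :=
  let (x, y) := z in / beta <= x /\ / beta <= y /\ x + y <= c.
End Regions.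

Definition pdec (P : Prop) : {P} + {~ P} := excluded_middle_informative P.

Definition affmap (beta : R) (z q : R * R) : R * R :=
  (beta * fst z - fst q, beta * snd z - snd q).

Definition State := (Omega * Upsilon * (R * R))%type.

(* One step of K_beta, together with the digit d_1 (the subtracted vector).
   The final default branch is never used on S_beta (the regions partition it). *)
Definition Kstep (beta : R) (s : State) : State * (R * R) :=
  let '(w, u, z) := s in
  let go w' u' i := ((w', u', affmap beta z (qv i)), qv i) in
  if pdec (E0 beta z) then go w u D0
  else if pdec (E1 beta z) then go w u D1
  else if pdec (E2 beta z) then go w u D2
  else if pdec (C01 beta z) then
    (if w 0%nat then go (shiftO w) u D1 else go (shiftO w) u D0)
  else if pdec (C12 beta z) then
    (if w 0%nat then go (shiftO w) u D2 else go (shiftO w) u D1)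
  else if pdec (C02 beta z) then
    (if w 0%nat then go (shiftO w) u D2 else go (shiftO w) u D0)
  else if pdec (C012 beta z) then go w (shiftU u) (u 0%nat)
  else ((w, u, affmap beta z (0, 0)), (0, 0)).

Definition K_beta (beta : R) (s : State) : State := fst (Kstep beta s).
Definition d1 (beta : R) (s : State) : R * R := snd (Kstep beta s).

(* digit n s = d_{n+1}(s) = d_1 (K_beta^n s). *)
Fixpoint Kiter (beta : R) (n : nat) (s : State) : State :=
  match n with O => s | S m => K_beta beta (Kiter beta m s) end.
Definition digit (beta : R) (n : nat) (s : State) : R * R :=
  d1 beta (Kiter beta n s).

(* z = sum_{i>=1} a_i beta^{-i}, with a k standing for a_{k+1}. *)
Definition is_beta_rep (beta : R) (a : nat -> R * R) (z : R * R) : Prop :=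
  infinite_sum (fun k => fst (a k) / beta ^ (S k)) (fst z) /\
  infinite_sum (fun k => snd (a k) / beta ^ (S k)) (snd z).

(* Main.v *)
Require Import Defs.
From Stdlib Require Import Reals Lra Lia ClassicalEpsilon.
From Coquelicot Require Import Coquelicot.
Open Scope R_scope.

Fixpoint zs (beta : R) (a : nat -> R * R) (z : R * R) (n : nat) : R * R :=
  match n with O => z | S m => affmap beta (zs beta a z m) (a m) end.

Definition digvals (a : nat -> R * R) :=
  forall i, a i = qv D0 \/ a i = qv D1 \/ a i = qv D2.

Lemma tail_series beta a z : 1 < beta -> is_beta_rep beta a z ->
  forall n, is_series (fun k => fst (a (n + k)%nat) / beta ^ (S k)) (fst (zs beta a z n)) /\
            is_series (fun k => snd (a (n + k)%nat) / beta ^ (S k)) (snd (zs beta a z n)).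
Proof.
  intros Hb [H1 H2] n. induction n as [|n [IH1 IH2]].
  - split; apply is_series_Reals; assumption.
  - assert (step : forall (A : nat -> R) xn,
      is_series (fun k => A (n + k)%nat / beta ^ (S k)) xn ->
      is_series (fun k => A (S n + k)%nat / beta ^ (S k)) (beta * xn - A n)).
    { intros A xn H.
      assert (E : plus (xn - A n / beta) (A (n + 0)%nat / beta ^ 1) = xn).
      { rewrite Nat.add_0_r. unfold plus; simpl. field. lra. }
      assert (H' : is_series (fun k => A (n + S k)%nat / beta ^ (S (S k))) (xn - A n / beta)).
      { apply (is_series_incr_1 (fun k => A (n + k)%nat / beta ^ (S k))).
        rewrite <- E in H. exact H. }
      apply (is_series_scal beta) in H'.
      eapply is_series_ext; [|replace (beta * xn - A n) with (scal beta (xn - A n / beta)); [exact H'|]].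
      + intro k. unfold scal; simpl. unfold mult; simpl.
        replace (n + S k)%nat with (S n + k)%nat by lia.
        assert (beta ^ k <> 0) by (apply pow_nonzero; lra).
        simpl. field. split; [assumption|lra].
      + unfold scal; simpl. unfold mult; simpl. field. lra. }
    split; [exact (step (fun m => fst (a m)) _ IH1) | exact (step (fun m => snd (a m)) _ IH2)].
Qed.


Lemma zs_in beta a z : 1 < beta -> is_beta_rep beta a z -> digvals a ->
  forall n, S_beta beta (zs beta a z n).
Proof.
  intros Hb Hr Hd n. destruct (tail_series beta a z Hb Hr n) as [H1 H2].
  assert (Hpos : forall k, 0 < beta ^ S k) by (intro; apply pow_lt; lra).
  assert (Hval : forall m, 0 <= fst (a m) /\ 0 <= snd (a m) /\ fst (a m) + snd (a m) <= 1).
  { intro m. destruct (Hd m) as [e|[e|e]]; rewrite e; simpl; lra. }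
  assert (nonneg : forall (f : nat -> R) l, is_series f l -> (forall k, 0 <= f k) -> 0 <= l).
  { intros f l Hf Hp. rewrite <- (is_series_unique _ _ Hf).
    assert (E : Series (fun _ => 0) = 0).
    { apply is_series_unique. pose proof (is_series_scal 0 _ _ Hf) as G.
      change (is_series (fun n => 0 * f n) (0 * l)) in G. rewrite Rmult_0_l in G.
      apply (is_series_ext _ _ _ (fun k => Rmult_0_l (f k)) G). }
    rewrite <- E. apply Series_le. intro; split; [lra| apply Hp]. eexists; exact Hf. }
  unfold S_beta. split; [|split].
  - apply (nonneg _ _ H1). intro k. apply Rmult_le_pos. apply Hval. left; apply Rinv_0_lt_compat; apply Hpos.
  - apply (nonneg _ _ H2). intro k. apply Rmult_le_pos. apply Hval. left; apply Rinv_0_lt_compat; apply Hpos.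
  - pose proof (is_series_plus _ _ _ _ H1 H2) as H3.
    change (is_series (fun k => fst (a (n + k)%nat) / beta ^ S k + snd (a (n + k)%nat) / beta ^ S k)
       (fst (zs beta a z n) + snd (zs beta a z n))) in H3.
    assert (Hq : Rabs (/ beta) < 1).
    { rewrite Rabs_right.
      apply (Rmult_lt_reg_l beta); [lra|]. rewrite Rinv_r; lra.
      left; apply Rinv_0_lt_compat; lra. }
    pose proof (is_series_scal (/ beta) _ _ (is_series_geom (/ beta) Hq)) as G.
    change (is_series (fun k => / beta * (/ beta) ^ k) (/ beta * / (1 - / beta))) in G.
    rewrite <- (is_series_unique _ _ H3).
    replace (/ (beta - 1)) with (Series (fun k => / beta * (/ beta) ^ k)).
    2:{ rewrite (is_series_unique _ _ G). field. split; lra. }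
    apply Series_le. 2:{ eexists; exact G. }
    intro k.
    rewrite <- Rinv_pow by lra.
    replace (/ beta * / beta ^ k) with (/ beta ^ S k) by (simpl; field; split; [apply pow_nonzero|]; lra).
    specialize (Hval (n + k)%nat). specialize (Hpos k).
    assert (0 < / beta ^ S k) by (apply Rinv_0_lt_compat; lra).
    unfold Rdiv. split; nra.
Qed.

Definition cls (beta : R) (z : R * R) : nat :=
  if pdec (Defs.E0 beta z) then 0%nat
  else if pdec (Defs.E1 beta z) then 1%nat
  else if pdec (Defs.E2 beta z) then 2%nat
  else if pdec (C01 beta z) then 3%nat
  else if pdec (C12 beta z) then 4%nat
  else if pdec (C02 beta z) then 5%nat
  else if pdec (C012 beta z) then 6%nat
  else 7%nat.

Definition isC (c : nat) : bool := (Nat.eqb c 3 || Nat.eqb c 4 || Nat.eqb c 5)%bool.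

Fixpoint pc beta a z (n : nat) : nat :=
  match n with O => O | S m => (pc beta a z m + (if isC (cls beta (zs beta a z m)) then 1 else 0))%nat end.
Fixpoint rc beta a z (n : nat) : nat :=
  match n with O => O | S m => (rc beta a z m + (if Nat.eqb (cls beta (zs beta a z m)) 6 then 1 else 0))%nat end.

Definition bit beta (a : nat -> R * R) z (n : nat) : bool :=
  if pdec (a n = qv D0) then false
  else if Nat.eqb (cls beta (zs beta a z n)) 4 then (if pdec (a n = qv D2) then true else false)
  else true.

Definition dg (a : nat -> R * R) (n : nat) : digit3 :=
  if pdec (a n = qv D1) then D1 else if pdec (a n = qv D2) then D2 else D0.

Definition wsel beta a z : Omega := fun m =>
  match excluded_middle_informative (exists n, pc beta a z n = m /\ isC (cls beta (zs beta a z n)) = true) with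
  | left H => bit beta a z (proj1_sig (constructive_indefinite_description _ H))
  | right _ => false end.

Definition usel beta a z : Upsilon := fun m =>
  match excluded_middle_informative (exists n, rc beta a z n = m /\ Nat.eqb (cls beta (zs beta a z n)) 6 = true) with
  | left H => dg a (proj1_sig (constructive_indefinite_description _ H))
  | right _ => D0 end.

Lemma pc_mono beta a z : forall k j, (pc beta a z k <= pc beta a z (k + j))%nat.
Proof. intros k j; induction j. rewrite Nat.add_0_r; lia. rewrite Nat.add_succ_r; simpl; lia. Qed.
Lemma rc_mono beta a z : forall k j, (rc beta a z k <= rc beta a z (k + j))%nat.
Proof. intros k j; induction j. rewrite Nat.add_0_r; lia. rewrite Nat.add_succ_r; simpl; lia. Qed.

Lemma pc_uniq beta a z n n' : pc beta a z n = pc beta a z n' ->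
  isC (cls beta (zs beta a z n)) = true -> isC (cls beta (zs beta a z n')) = true -> n = n'.
Proof.
  intros E c c'.
  destruct (Nat.lt_trichotomy n n') as [l|[l|l]]; auto; exfalso.
  - pose proof (pc_mono beta a z (S n) (n' - S n)). replace (S n + (n' - S n))%nat with n' in H by lia.
    simpl in H. rewrite c in H. lia.
  - pose proof (pc_mono beta a z (S n') (n - S n')). replace (S n' + (n - S n'))%nat with n in H by lia.
    simpl in H. rewrite c' in H. lia.
Qed.
Lemma rc_uniq beta a z n n' : rc beta a z n = rc beta a z n' ->
  Nat.eqb (cls beta (zs beta a z n)) 6 = true -> Nat.eqb (cls beta (zs beta a z n')) 6 = true -> n = n'.
Proof.
  intros E c c'.
  destruct (Nat.lt_trichotomy n n') as [l|[l|l]]; auto; exfalso.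
  - pose proof (rc_mono beta a z (S n) (n' - S n)). replace (S n + (n' - S n))%nat with n' in H by lia.
    simpl in H. rewrite c in H. lia.
  - pose proof (rc_mono beta a z (S n') (n - S n')). replace (S n' + (n - S n'))%nat with n in H by lia.
    simpl in H. rewrite c' in H. lia.
Qed.

Lemma wsel_key beta a z n : isC (cls beta (zs beta a z n)) = true -> wsel beta a z (pc beta a z n) = bit beta a z n.
Proof.
  intro c. unfold wsel. destruct (excluded_middle_informative _) as [H|H].
  - destruct (constructive_indefinite_description _ H) as [n' [e c']]; simpl.
    rewrite (pc_uniq beta a z n' n e c' c). reflexivity.
  - exfalso; apply H; eauto.
Qed.
Lemma usel_key beta a z n : Nat.eqb (cls beta (zs beta a z n)) 6 = true -> usel beta a z (rc beta a z n) = dg a n.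
Proof.
  intro c. unfold usel. destruct (excluded_middle_informative _) as [H|H].
  - destruct (constructive_indefinite_description _ H) as [n' [e c']]; simpl.
    rewrite (rc_uniq beta a z n' n e c' c). reflexivity.
  - exfalso; apply H; eauto.
Qed.

Lemma compat beta z q : 1 < beta -> S_beta beta z -> S_beta beta (affmap beta z q) ->
  (q = qv D0 \/ q = qv D1 \/ q = qv D2) ->
  (Defs.E0 beta z -> q = qv D0) /\ (Defs.E1 beta z -> q = qv D1) /\ (Defs.E2 beta z -> q = qv D2) /\
  (C01 beta z -> q = qv D0 \/ q = qv D1) /\ (C12 beta z -> q = qv D1 \/ q = qv D2) /\
  (C02 beta z -> q = qv D0 \/ q = qv D2).
Proof.
  intros Hb Hz Hz' Hq. destruct z as [x y].
  assert (e1 : beta * / beta = 1) by (field; lra).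
  assert (e2 : beta * / (beta * (beta - 1)) = / (beta - 1)) by (field; lra).
  unfold S_beta, affmap, Defs.E0, Defs.E1, Defs.E2, C01, C12, C02 in *; simpl in *.
  destruct Hq as [e|[e|e]]; rewrite e in *; simpl in *;
  repeat split; intros; auto; exfalso; nra.
Qed.

Lemma cover beta z : S_beta beta z ->
  Defs.E0 beta z \/ Defs.E1 beta z \/ Defs.E2 beta z \/ C01 beta z \/ C12 beta z \/ C02 beta z \/ C012 beta z.
Proof.
  destruct z as [x y]. unfold S_beta, Defs.E0, Defs.E1, Defs.E2, C01, C12, C02, C012; simpl. intros.
  destruct (Rlt_or_le x (/ beta)); destruct (Rlt_or_le y (/ beta));
  destruct (Rle_or_lt (x + y) (/ (beta * (beta - 1)))); lra.
Qed.

Lemma qv_dg (a : nat -> R * R) n : digvals a -> qv (dg a n) = a n.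
Proof.
  intro Hd. unfold dg. destruct (pdec (a n = qv D1)) as [e|e]; [auto|].
  destruct (pdec (a n = qv D2)) as [e'|e']; [auto|].
  destruct (Hd n) as [h|[h|h]]; [auto|contradiction|contradiction].
Qed.

Lemma qv_neq : qv D1 <> qv D0 /\ qv D2 <> qv D0 /\ qv D1 <> qv D2.
Proof. simpl; repeat split; intro h; injection h; lra. Qed.

Lemma stepL beta a z : 1 < beta -> is_beta_rep beta a z -> digvals a -> forall n W U,
  (forall k, W k = wsel beta a z (k + pc beta a z n)%nat) ->
  (forall k, U k = usel beta a z (k + rc beta a z n)%nat) ->
  exists W' U', Kstep beta (W, U, zs beta a z n) = ((W', U', zs beta a z (S n)), a n) /\
   (forall k, W' k = wsel beta a z (k + pc beta a z (S n))%nat) /\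
   (forall k, U' k = usel beta a z (k + rc beta a z (S n))%nat).
Proof.
  intros Hb Hr Hd n W U HW HU.
  pose proof (zs_in beta a z Hb Hr Hd n) as Hz.
  pose proof (zs_in beta a z Hb Hr Hd (S n)) as Hz'.
  simpl in Hz'.
  destruct (compat beta (zs beta a z n) (a n) Hb Hz Hz' (Hd n)) as [c0 [c1 [c2 [c3 [c4 c5]]]]].
  pose proof (cover beta _ Hz) as Hcov.
  pose proof (wsel_key beta a z n) as Kw.
  pose proof (usel_key beta a z n) as Ku.
  pose proof (qv_dg a n Hd) as Qd.
  pose proof qv_neq as [n10 [n20 n12]].
  assert (W0 : W 0%nat = wsel beta a z (pc beta a z n)) by (rewrite HW; reflexivity).
  assert (U0 : U 0%nat = usel beta a z (rc beta a z n)) by (rewrite HU; reflexivity).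
  change (zs beta a z (S n)) with (affmap beta (zs beta a z n) (a n)).
  change (pc beta a z (S n)) with (pc beta a z n + (if isC (cls beta (zs beta a z n)) then 1 else 0))%nat.
  change (rc beta a z (S n)) with (rc beta a z n + (if Nat.eqb (cls beta (zs beta a z n)) 6 then 1 else 0))%nat.
  revert Kw Ku. unfold bit. set (zn := zs beta a z n) in *. unfold cls.
  unfold Kstep. cbv beta iota zeta.
  repeat (match goal with |- context [pdec ?P] => match P with (_ = _) => fail 1 | _ => destruct (pdec P) end end; cbv beta iota).
  all: intros Kw Ku.
  all: cbn [isC Nat.eqb orb] in *.
  Ltac fin W U HW HU := split; [reflexivity|split; intro k;
     [unfold shiftO; rewrite HW; f_equal; lia | unfold shiftU; rewrite HU; f_equal; lia]].
  - exists W, U. rewrite (c0 ltac:(assumption)). fin W U HW HU.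
  - exists W, U. rewrite (c1 ltac:(assumption)). fin W U HW HU.
  - exists W, U. rewrite (c2 ltac:(assumption)). fin W U HW HU.
  - rewrite W0, (Kw eq_refl). exists (shiftO W), U.
    destruct (pdec (a n = qv D0)) as [e'|e'].
    + rewrite e'. fin W U HW HU.
    + destruct (c3 ltac:(assumption)) as [h|h]; [contradiction|]. rewrite h. fin W U HW HU.
  - rewrite W0, (Kw eq_refl). exists (shiftO W), U.
    destruct (c4 ltac:(assumption)) as [h|h].
    + destruct (pdec (a n = qv D0)) as [e'|e']; [rewrite h in e'; contradiction|].
      destruct (pdec (a n = qv D2)) as [e''|e'']; [rewrite h in e''; contradiction|].
      rewrite h. fin W U HW HU.
    + destruct (pdec (a n = qv D0)) as [e'|e']; [rewrite h in e'; contradiction|].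
      destruct (pdec (a n = qv D2)) as [e''|e'']; [|contradiction].
      rewrite h. fin W U HW HU.
  - rewrite W0, (Kw eq_refl). exists (shiftO W), U.
    destruct (pdec (a n = qv D0)) as [e'|e'].
    + rewrite e'. fin W U HW HU.
    + destruct (c5 ltac:(assumption)) as [h|h]; [contradiction|]. rewrite h. fin W U HW HU.
  - rewrite U0, (Ku eq_refl), Qd. exists W, (shiftU U). fin W U HW HU.
  - exfalso. tauto.
Qed.

Theorem theorem4p3 (beta : R) (z : R * R) (a : nat -> R * R) :
  1 < beta <= 3 / 2 ->
  S_beta beta z ->
  (forall i, a i = qv D0 \/ a i = qv D1 \/ a i = qv D2) ->
  is_beta_rep beta a z ->
  exists (w : Omega) (u : Upsilon),
    forall i : nat, a i = digit beta i (w, u, z).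
Proof.
  intros [Hb _] _ Hd Hr.
  exists (wsel beta a z), (usel beta a z).
  assert (inv : forall n, exists (W : Omega) (U : Upsilon), Defs.Kiter beta n (wsel beta a z, usel beta a z, z) = (W, U, zs beta a z n) /\ (forall k, W k = wsel beta a z (k + pc beta a z n)%nat) /\ (forall k, U k = usel beta a z (k + rc beta a z n)%nat)).
  { induction n as [|n [W [U [E [HW HU]]]]].
    - exists (wsel beta a z), (usel beta a z). simpl. split; [reflexivity|split; intro k; rewrite Nat.add_0_r; reflexivity].
    - destruct (stepL beta a z Hb Hr Hd n W U HW HU) as [W' [U' [E' [HW' HU']]]].
      exists W', U'. split; [|split; assumption].
      cbn [Defs.Kiter]. rewrite E. unfold K_beta. exact (f_equal fst E'). }
  intro i. destruct (inv i) as [W [U [E [HW HU]]]].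
  destruct (stepL beta a z Hb Hr Hd i W U HW HU) as [W' [U' [E' _]]].
  unfold digit, d1. rewrite E. exact (eq_sym (f_equal snd E')).
Qed.
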